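(* Let $G=(V,E)$ be a finite undirected (symmetric) graph with real edge weights, and let $P=\{S_1,\dots,S_n\}$ be a partition of $V$ with $n\ge 2$. Assume minimum spanning forests of all graphs considered here are unique. For $1\le i<j\le n$ let $G[S_i\cup S_j]$ be the subgraph of $G$ induced by $S_i\cup S_j$. Then \[\mathrm{MSF}(G)=\mathrm{MSF}\Big(\bigcup_{1\le i<j\le n}\mathrm{MSF}\big(G[S_i\cup S_j]\big)\Big),\] where the union is the graph on vertex set $V$ whose edge set is the union of the edge sets of the forests $\mathrm{MSF}(G[S_i\cup S_j])$, with edge weights inherited from $G$.
   Context: For a weighted undirected graph $H$, $\mathrm{MSF}(H)$ denotes its minimum spanning forest (a spanning forest consisting of a minimum spanning tree of each connected component of $H$, minimizing total edge weight), regarded as a set of edges. For $S\subseteq V$, $G[S]$ is the induced subgraph on $S$: vertex set $S$ and all edges of $G$ with both endpoints in $S$, with the same weights. *)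

(* Defs.v *)
From HB Require Import structures.
From mathcomp Require Import all_boot all_order all_algebra.
From mathcomp Require Import boolp.
From mathcomp Require Export reals.
Set Implicit Arguments. Unset Strict Implicit. Unset Printing Implicit Defensive.
Import Order.TTheory GRing.Theory Num.Theory.
Local Open Scope ring_scope.

(* Undirected simple graphs on a finite vertex type T: an edge is a
   2-element set {x, y}; a graph (for the purposes of MSF) is given by its
   edge set; weights are a function on edges. *)

Section MSF.
Variables (T : finType) (R : realType) (w : {set T} -> R).

Definition adj (F : {set {set T}}) : rel T := fun x y => [set x; y] \in F.

Definition induced (E : {set {set T}}) (S : {set T}) : {set {set T}} :=
  [set e in E | e \subset S].

Definition acyclic (F : {set {set T}}) : Prop :=
  ~ exists s : seq T, [/\ (3 <= size s)%N, uniq s & cycle (adj F) s].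

Definition spanning_forest (E F : {set {set T}}) : Prop :=
  [/\ F \subset E, acyclic F & forall x y, connect (adj F) x y = connect (adj E) x y].

Definition weight (F : {set {set T}}) : R := \sum_(e in F) w e.

Definition is_msf (E F : {set {set T}}) : Prop :=
  spanning_forest E F /\
  forall F', spanning_forest E F' -> weight F <= weight F'.

Definition unique_msf (E : {set {set T}}) : Prop :=
  forall F1 F2, is_msf E F1 -> is_msf E F2 -> F1 = F2.

Definition msf (E : {set {set T}}) : {set {set T}} :=
  odflt set0 [pick F | `[< is_msf E F >] ].

End MSF.

(* Main.v *)
Require Import Defs.
From HB Require Import structures.
From mathcomp Require Import all_boot all_order all_algebra.
From mathcomp Require Import reals.
From mathcomp Require Import boolp.
Import Order.TTheory GRing.Theory Num.Theory.
Local Open Scope ring_scope.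
Set Implicit Arguments. Unset Strict Implicit.

Section L.
Variables (T : finType).
Implicit Types (A B F G : {set {set T}}).

Lemma adj_sym F : symmetric (adj F).
Proof. by move=> x y; rewrite /adj setUC. Qed.

Lemma connect_ind (e : rel T) (P : T -> Prop) x y :
  P x -> (forall a b, P a -> e a b -> P b) -> connect e x y -> P y.
Proof.
move=> Px H /connectP[p pp ->]; elim: p x Px pp => //= z p IH x Px /andP[exz pz].
exact: IH (H _ _ Px exz) pz.
Qed.

Lemma connect_symA F x y : connect (adj F) x y -> connect (adj F) y x.
Proof.
apply: (connect_ind (P := fun z => connect (adj F) z x)); first exact: connect0.
by move=> a b Pa ab; apply: connect_trans Pa; apply: connect1; rewrite adj_sym.
Qed.

Lemma connect_mono A B x y : A \subset B -> connect (adj A) x y -> connect (adj B) x y.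
Proof.
move=> AB; apply: connect_sub => a b ab; apply: connect1.
by rewrite /adj (subsetP AB).
Qed.

Lemma acyclic_sub A B : A \subset B -> acyclic B -> acyclic A.
Proof.
move=> AB acB [s [s3 us cs]]; apply: acB; exists s; split => //.
by apply: sub_cycle cs => a b; rewrite /adj => /(subsetP AB).
Qed.

Lemma adjD F a b c d : adj F c d -> (c \notin [set a; b]) || (d \notin [set a; b]) ->
  adj (F :\ [set a; b]) c d.
Proof.
rewrite /adj => Fcd H; rewrite in_setD1 Fcd andbT; apply/eqP => E.
by case/orP: H; rewrite -E !inE eqxx ?orbT.
Qed.

Lemma pathD F a b z t : path (adj F) z (rcons t a) ->
  all (fun c => c \notin [set a; b]) t -> t != [::] ->
  path (adj (F :\ [set a; b])) z (rcons t a).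
Proof.
elim: t z => // c t IH z /= /andP[zc pt] /andP[nc nt] _.
rewrite adjD ?nc ?orbT //=.
case: t IH pt nt => [|c' t'] IH pt nt /=.
  by move: pt => /= /andP[ca _]; rewrite adjD ?nc.
exact: IH.
Qed.

Lemma cyc_conn F a b t : uniq [:: a, b & t] -> t != [::] ->
  cycle (adj F) [:: a, b & t] -> connect (adj (F :\ [set a; b])) b a.
Proof.
move=> u tn /= /andP[ab pF]; apply/connectP; exists (rcons t a); last by rewrite last_rcons.
apply: pathD => //; apply/allP => c ct; move: u => /= /andP[].
rewrite inE negb_or => /andP[_ nat] /andP[nbt _]; apply/negP; rewrite !inE => /orP[] /eqP Ec; subst c.
  by rewrite ct in nat.
by rewrite ct in nbt.
Qed.

Lemma factA F x y : acyclic F -> [set x; y] \in F -> x != y ->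
  ~~ connect (adj (F :\ [set x; y])) x y.
Proof.
move=> ac e xy; apply/negP => /connectP[p pp ly].
case: (shortenP pp) ly => p' pp' up' _ ly.
apply: ac; exists (x :: p'); split => //; last first.
  rewrite /= rcons_path -ly adj_sym /adj e andbT.
  by apply: sub_path pp' => c d; rewrite /adj in_setD1 => /andP[].
case: p' pp' up' ly => [|c [|c' t]] //= pp' up' ly.
  by rewrite ly eqxx in xy.
move: pp'; rewrite andbT -ly /adj in_setD1 eqxx //.
Qed.

Lemma factB F u v : acyclic F -> ~~ connect (adj F) u v ->
  acyclic ([set u; v] |: F).
Proof.
move=> ac nuv [s [s3 us cs]].
case: (boolP (all (fun x => adj F x (next s x)) s)) => [/allP H|].
  by apply: ac; exists s; split => //; apply: cycle_from_next.
case/allPn => a ins na.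
have := next_cycle cs ins; move: na; rewrite /adj in_setU1 => /negPf -> ; rewrite orbF => /eqP Eab.
case/splitPr: ins us cs s3 Eab => s1 s2 us cs s3 Eab.
have us' : uniq ((a :: s2) ++ s1) by rewrite -rot_size_cat rot_uniq.
have cs' : cycle (adj ([set u; v] |: F)) ((a :: s2) ++ s1) by rewrite -rot_size_cat rot_cycle.
have s3' : (3 <= size ((a :: s2) ++ s1))%N by rewrite -rot_size_cat size_rot.
have nx : next (s1 ++ a :: s2) a = next ((a :: s2) ++ s1) a by rewrite -rot_size_cat next_rot.
rewrite nx in Eab; move: us' cs' s3' Eab => /=.
clear us cs s3 nx; case: (s2 ++ s1) => [|b [|c t]] //= us cs _.
rewrite eqxx => Eab.
have := cyc_conn us isT cs; rewrite Eab => /(connect_mono (B := F)).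
have sub : ([set u; v] |: F) :\ [set u; v] \subset F.
  by apply/subsetP => z; rewrite !inE => /andP[/negPf -> ]. 
move=> /(_ sub) cba.
have uv : u != v by apply: contraNneq nuv => ->; exact: connect0.
have : u \in [set a; b] by rewrite Eab !inE eqxx.
have : v \in [set a; b] by rewrite Eab !inE eqxx orbT.
rewrite !inE => /orP[] /eqP Ev /orP[] /eqP Eu; subst.
- by rewrite eqxx in uv.
- by rewrite cba in nuv.
- by rewrite (connect_symA cba) in nuv.
- by rewrite eqxx in uv.
Qed.

Lemma connD F x y a b : [set x; y] \in F -> connect (adj F) a b ->
  connect (adj (F :\ [set x; y])) a b \/
  ((connect (adj (F :\ [set x; y])) a x || connect (adj (F :\ [set x; y])) a y) &&
   (connect (adj (F :\ [set x; y])) x b || connect (adj (F :\ [set x; y])) y b)).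
Proof.
move=> e; apply: (connect_ind (P := fun b =>
  connect (adj (F :\ [set x; y])) a b \/
  ((connect (adj (F :\ [set x; y])) a x || connect (adj (F :\ [set x; y])) a y) &&
   (connect (adj (F :\ [set x; y])) x b || connect (adj (F :\ [set x; y])) y b)))); first by left; exact: connect0.
move=> c d Pc; rewrite {1}/adj => cd.
case: (eqVneq [set c; d] [set x; y]) => [Ecd | ncd].
  have : c \in [set x; y] by rewrite -Ecd !inE eqxx.
  have : d \in [set x; y] by rewrite -Ecd !inE eqxx orbT.
  rewrite !inE => /orP[] /eqP Ed /orP[] /eqP Ec; rewrite Ed; right;
   case: Pc => [H | /andP[H _]]; rewrite ?Ec in H; rewrite H ?connect0 /= ?orbT //.
have cdD : adj (F :\ [set x; y]) c d by rewrite /adj in_setD1 ncd cd.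
case: Pc => [Pc | /andP[-> H]]; first by left; apply: connect_trans Pc (connect1 cdD).
right; case/orP: H => H; apply/orP; [left|right]; exact: connect_trans H (connect1 cdD).
Qed.

Lemma conn_pair G c d u v : [set c; d] = [set u; v] -> connect (adj G) u v ->
  connect (adj G) c d.
Proof.
move=> E uv.
have : c \in [set u; v] by rewrite -E !inE eqxx.
have : d \in [set u; v] by rewrite -E !inE eqxx orbT.
rewrite !inE => /orP[] /eqP -> /orP[] /eqP ->; rewrite ?connect0 //.
exact: connect_symA.
Qed.

Lemma exchange E F u v a b : spanning_forest E F -> [set u; v] \in F ->
  [set a; b] \in E -> ~~ connect (adj (F :\ [set u; v])) a b ->
  spanning_forest E ([set a; b] |: (F :\ [set u; v])).
Proof.
move=> [FE acF cF] e ab nab.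
have F'E : [set a; b] |: (F :\ [set u; v]) \subset E.
  by apply/subsetP => z; rewrite !inE => /orP[/eqP -> // | /andP[_ /(subsetP FE)]].
have subD : F :\ [set u; v] \subset [set a; b] |: (F :\ [set u; v]) by apply: subsetU1.
split => //.
  apply: factB => //; exact: acyclic_sub (subD1set _ _) acF.
move=> x y; apply/idP/idP; first exact: connect_mono.
rewrite -cF; apply: connect_sub => c d cd.
case: (eqVneq [set c; d] [set u; v]) => [Ecd | ncd]; last first.
  by apply: connect1; move: cd; rewrite /adj !inE ncd => ->; rewrite orbT.
apply: (conn_pair Ecd).
have abF : connect (adj F) a b by rewrite cF; apply: connect1.
have ab' : adj ([set a; b] |: (F :\ [set u; v])) a b by rewrite /adj !inE eqxx.
case: (connD e abF) => [H|]; first by rewrite H in nab.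
case/andP => /orP[] H1 /orP[] H2.
- by rewrite (connect_trans H1 H2) in nab.
- apply: connect_trans (connect_mono subD (connect_symA H1)) _.
  apply: connect_trans (connect1 ab') _.
  exact: connect_mono subD (connect_symA H2).
- apply: connect_trans (connect_mono subD H2) _.
  apply: connect_trans (connect1 (_ : adj _ b a)) _; first by rewrite adj_sym.
  exact: connect_mono subD H1.
- by rewrite (connect_trans H1 H2) in nab.
Qed.

Lemma sf_exists E : exists F, spanning_forest E F.
Proof.
pose P := fun F : {set {set T}} => (F \subset E) &&
  [forall x, [forall y, connect (adj F) x y == connect (adj E) x y]].
have PE : P E by rewrite /P subxx; apply/forallP => x; apply/forallP => y.
have [F PF minF] := @arg_minnP _ E P (fun F => #|F|) PE.
move: PF => /andP[FE /forallP cF].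
have cF' : forall x y, connect (adj F) x y = connect (adj E) x y.
  by move=> x y; move: (cF x) => /forallP /(_ y) /eqP.
exists F; split => //.
move=> [s [s3 us cs]].
case: s s3 us cs => [|a [|b [|c t]]] // _ us cs.
have ct : (c :: t) != [::] by [].
have := cyc_conn us ct cs => ba.
have abF : [set a; b] \in F by move: cs => /= /andP[].
have PD : P (F :\ [set a; b]).
  rewrite /P; apply/andP; split.
    exact: subset_trans (subD1set _ _) FE.
  apply/forallP => x; apply/forallP => y; apply/eqP; rewrite -cF'.
  apply/idP/idP; first exact: connect_mono (subD1set _ _).
  apply: connect_sub => d f df.
  case: (eqVneq [set d; f] [set a; b]) => [Edf | ndf].
    exact: conn_pair Edf (connect_symA ba).
  by apply: connect1; rewrite /adj in_setD1 ndf.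
have := minF _ PD; rewrite (cardsD1 [set a; b] F) abF.
by rewrite ltnn.
Qed.
End L.

Section W.
Variables (T : finType) (R : realType) (w : {set T} -> R).
Implicit Types (A B F G E : {set {set T}}).

Lemma msf_spec E : is_msf w E (msf w E).
Proof.
have [F0 sF0] := sf_exists E.
pose P := fun F : {set {set T}} => `[< spanning_forest E F >].
have P0 : P F0 by apply/asboolP.
have [F PF minF] := @arg_minP _ R _ F0 P (weight w) P0.
have ex : is_msf w E F.
  split; first exact/asboolP.
  by move=> F' sF'; apply: minF; apply/asboolP.
rewrite /msf; case: pickP => [F' /asboolP // | /(_ F) /asboolP].
by move/(_ ex).
Qed.
End W.
Section M.
Variables (T : finType).
Implicit Types (A B F G E K : {set {set T}}).

Lemma bridge F x y : acyclic F ->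
  (forall f, f \in F -> exists u v, f = [set u; v]) ->
  connect (adj F) x y ->
  forall K, K \subset F -> ~~ connect (adj (F :\: K)) x y ->
  exists2 f, f \in K & ~~ connect (adj (F :\ f)) x y.
Proof.
move=> acF hF cxy K.
move: {2}#|K| (leqnn #|K|) => n; elim: n K => [|n IH] K.
  rewrite leqn0 cards_eq0 => /eqP -> _; rewrite setD0 cxy //.
move=> Kn KF nK.
case: (set_0Vmem K) => [K0 | [f fK]]; first by rewrite K0 setD0 cxy in nK.
have fF : f \in F := subsetP KF f fK.
case: (boolP (connect (adj (F :\: (K :\ f))) x y)) => [c' | nc']; last first.
  have [|||f' f'K nf'] := IH (K :\ f).
  - by move: Kn; rewrite (cardsD1 f K) fK add1n ltnS.
  - exact: subset_trans (subD1set _ _) KF.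
  - exact: nc'.
  by exists f' => //; move: f'K; rewrite in_setD1 => /andP[].
exists f => //.
have [u [v Ef]] := hF f fF; subst f.
have fA : [set u; v] \in F :\: (K :\ [set u; v]) by rewrite !inE eqxx fF.
have EA : (F :\: (K :\ [set u; v])) :\ [set u; v] = F :\: K.
  apply/setP => z; rewrite !inE; case: (eqVneq z [set u; v]) => [->|] //=.
  by rewrite fK.
have subKf : F :\: K \subset F :\ [set u; v].
  by apply/subsetP => z; rewrite !inE => /andP[zK ->]; rewrite andbT; apply: contraNneq zK => ->.
case: (connD fA c') => [|]; rewrite EA; first by move=> H; rewrite H in nK.
case/andP => /orP[] H1 /orP[] H2; apply/negP => cf.
- by rewrite (connect_trans H1 H2) in nK.
- have uv : u != v by apply: contraNneq nK => Euv; rewrite Euv in H1; exact: connect_trans H1 H2.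
  move: (factA acF fF uv) => /negP; apply.
  apply: connect_trans (connect_mono subKf (connect_symA H1)) _.
  apply: connect_trans cf _.
  exact: connect_mono subKf (connect_symA H2).
- have uv : u != v by apply: contraNneq nK => Euv; rewrite -Euv in H1; exact: connect_trans H1 H2.
  move: (factA acF fF uv) => /negP; apply.
  apply: connect_trans (connect_mono subKf H2) _.
  apply: connect_trans (connect_symA cf) _.
  exact: connect_mono subKf H1.
- by rewrite (connect_trans H1 H2) in nK.
Qed.
End M.

Section K.
Variables (T : finType) (R : realType) (w : {set T} -> R).
Implicit Types (A B F G E H K : {set {set T}}).

Lemma key E H F Fij x y : H \subset E ->
  (forall f, f \in E -> exists u v, f = [set u; v]) ->
  is_msf w E F -> unique_msf w E -> is_msf w H Fij ->
  [set x; y] \in F -> [set x; y] \in H -> x != y -> [set x; y] \in Fij.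
Proof.
move=> HE hE2 [[FE acF cF] minF] uE [[FijH acFij cFij] minFij] eF eH xy.
apply/negPn/negP => neFij.
set e := [set x; y] in eF eH neFij *.
have ne := factA acF eF xy.
have cxy : connect (adj Fij) x y by rewrite cFij; apply: connect1.
pose K := [set f in Fij | [exists u, exists v, (f == [set u; v]) &&
   connect (adj (F :\ e)) x u && ~~ connect (adj (F :\ e)) x v]].
have KF : K \subset Fij by apply/subsetP => f; rewrite inE => /andP[].
have hFij : forall f, f \in Fij -> exists u v, f = [set u; v].
  by move=> f fF; apply: hE2; apply: (subsetP HE); apply: (subsetP FijH).
have nK : ~~ connect (adj (Fij :\: K)) x y.
  apply/negP => cK; move/negP: ne; apply.
  apply: (connect_ind (P := fun z => connect (adj (F :\ e)) x z) (connect0 _ x) _ cK).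
  move=> c d Pc; rewrite /adj in_setD => /andP[nK cdF].
  apply/negPn/negP => nd; move/negP: nK; apply.
  rewrite inE cdF /=; apply/existsP; exists c; apply/existsP; exists d.
  by rewrite eqxx Pc nd.
have [f fK nf] := bridge acFij hFij cxy KF nK.
move: fK; rewrite inE => /andP[fFij /existsP[u /existsP[v /andP[/andP[/eqP Ef xu] nxv]]]].
subst f.
have nuv : ~~ connect (adj (F :\ e)) u v.
  by apply: contraNN nxv => uv; apply: connect_trans xu uv.
have fE : [set u; v] \in E by apply: (subsetP HE); apply: (subsetP FijH).
have sF1 := exchange (And3 FE acF cF) eF fE nuv.
have sF2 := exchange (And3 FijH acFij cFij) fFij eH nf.
have fnF : [set u; v] \notin F :\ e.
  by apply: contraNN nuv => Hf; apply: connect1; rewrite /adj.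
have fne : [set u; v] != e by apply: contraNneq neFij => <-.
have enF : e \notin Fij :\ [set u; v] by rewrite in_setD1 negb_and neFij orbT.
have wF : weight w F = w e + weight w (F :\ e) by rewrite /weight (big_setD1 e eF).
have wF1 : weight w ([set u; v] |: (F :\ e)) = w [set u; v] + weight w (F :\ e).
  by rewrite /weight big_setU1.
have wFij : weight w Fij = w [set u; v] + weight w (Fij :\ [set u; v]).
  by rewrite /weight (big_setD1 _ fFij).
have wF2 : weight w (e |: (Fij :\ [set u; v])) = w e + weight w (Fij :\ [set u; v]).
  by rewrite /weight big_setU1.
have lt : w e < w [set u; v].
  rewrite ltNge; apply/negP => le.
  have msf1 : is_msf w E ([set u; v] |: (F :\ e)).
    split => // F' sF'; apply: le_trans (minF F' sF').
    by rewrite wF1 wF lerD2r.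
  have := uE _ _ msf1 (conj (And3 FE acF cF) minF) => EF.
  move: fnF; rewrite -EF in_setD1 !inE eqxx /=.
  by rewrite fne.
have := minFij _ sF2; rewrite wFij wF2 lerD2r.
by rewrite leNgt lt.
Qed.
End K.

Unset Implicit Arguments. Set Strict Implicit.

Theorem theorem1 (T : finType) (R : realType) (w : {set T} -> R)
  (V : {set T}) (E : {set {set T}}) (P : {set {set T}})
  (hE : forall e, e \in E -> e \subset V /\ #|e| = 2%N)
  (hP : partition P V) (hn : (2 <= #|P|)%N) :
  let U := \bigcup_(S in P) \bigcup_(S' in P | S != S')
             msf w (induced E (S :|: S')) in
  unique_msf w E ->
  (forall S S', S \in P -> S' \in P -> S != S' ->
     unique_msf w (induced E (S :|: S'))) ->
  unique_msf w U ->
  msf w E = msf w U.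
Proof.
move=> U uE uij uU.
have hE2 : forall f, f \in E -> exists u v, f = [set u; v].
  move=> f /hE [_ /eqP /cards2P [u [v [_ ->]]]]; by exists u, v.
have indE : forall S, induced E S \subset E.
  by move=> S; apply/subsetP => f; rewrite inE => /andP[].
have UE : U \subset E.
  apply/subsetP => f /bigcupP [S SP /bigcupP [S' _ fM]].
  have [[sF _ _] _] := msf_spec w (induced E (S :|: S')).
  exact: (subsetP (indE _)) (subsetP sF _ fM).
have [[FE acF cF] minF] := msf_spec w E.
set F := msf w E in FE acF cF minF *.
have cov := cover_partition hP.
have inP : forall z, z \in V -> exists2 S, S \in P & z \in S.
  by move=> z; rewrite -cov => /bigcupP.
have FU : F \subset U.
  apply/subsetP => e eF.
  have eE := subsetP FE e eF.
  have [eV /eqP /cards2P [x [y [xy Ee]]]] := hE e eE.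
  have [Sx SxP xSx] : exists2 S, S \in P & x \in S by apply: inP; apply: (subsetP eV); rewrite Ee !inE eqxx.
  have [Sy SyP ySy] : exists2 S, S \in P & y \in S by apply: inP; apply: (subsetP eV); rewrite Ee !inE eqxx orbT.
  have [S' [S'P nS' xyS]] : exists S', [/\ S' \in P, Sx != S' & e \subset Sx :|: S'].
    case: (eqVneq Sx Sy) => [ESxy | nxy].
      have : (0 < #|P :\ Sx|)%N by move: hn; rewrite (cardsD1 Sx P) SxP.
      rewrite card_gt0 => /set0Pn [S' ]; rewrite in_setD1 => /andP[nS S'P].
      exists S'; split => //; first by rewrite eq_sym.
      apply/subsetP => z; rewrite Ee !inE => /orP[] /eqP ->; first by rewrite xSx.
      by rewrite ESxy ySy.
    exists Sy; split => //.
    apply/subsetP => z; rewrite Ee !inE => /orP[] /eqP ->; first by rewrite xSx.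
    by rewrite ySy orbT.
  have eH : e \in induced E (Sx :|: S') by rewrite inE eE.
  have := key (x:=x) (y:=y) (indE _) hE2 (conj (And3 FE acF cF) minF) uE
     (msf_spec w (induced E (Sx :|: S'))).
  rewrite -Ee => /(_ eF eH xy) eM.
  apply/bigcupP; exists Sx => //; apply/bigcupP; exists S' => //.
  by rewrite S'P.
have cU : forall x y, connect (adj U) x y = connect (adj E) x y.
  move=> x y; apply/idP/idP; first exact: connect_mono.
  by rewrite -cF; apply: connect_mono.
have msfU : is_msf w U F.
  split.
    split => // x y; by rewrite cF cU.
  move=> F' [F'U acF' cF']; apply: minF; split => //.
    exact: subset_trans F'U UE.
  by move=> x y; rewrite cF' cU.
exact: uU msfU (msf_spec w U).
Qed.
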